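(* Let $K\ge1$ and let $\mathfrak{L}\subset\mathcal{P}^2_K(X)$ be a $\mathfrak{Q}_L$-clusterable family. Then for every $\Gamma\in\mathcal{M}(\mathfrak{L})$ the Bayes optimal partition is well-defined: there is a unique $\Lambda\in\mathfrak{L}$ with $m(\Lambda)=\Gamma$, and hence a unique Bayes optimal partition $\pi_\Gamma:=\pi_\Lambda$.
   Context: $X$ is a compact metric space and all probability measures are absolutely continuous w.r.t. a base measure $\zeta$. $\mathcal{P}(X)$: regular Borel probability measures with finite $r$-th moments with Hellinger metric $\rho$; $\mathcal{P}^2_s(X)$: probability measures on $\mathcal{P}(X)$ with at most $s$ atoms; $m(\Lambda)=\sum_k\lambda_k\gamma_k$; $\mathcal{M}(\mathfrak{L})=\{m(\Lambda):\Lambda\in\mathfrak{L}\}$. For $\Lambda=\sum_{k=1}^K\lambda_k\delta_{\gamma_k}$ with $f_k$ the density of $\gamma_k$, $c_\Lambda(x)=\arg\max_k\lambda_kf_k(x)$ on $X_0=X\setminus E_0$, $E_0=\bigcup_{i\ne j}\{x:\lambda_if_i(x)=\lambda_jf_j(x)\}$; the Bayes optimal partition $\pi_\Lambda$ of $X_0$ is the partition into classes of the relation $x\sim y\iff c_\Lambda(x)=c_\Lambda(y)$. Fixed base family $\mathfrak{Q}$ with $\mathfrak{Q}_L=\mathfrak{Q}\cap\mathcal{P}^2_L(X)$, $\mathcal{M}(\mathfrak{Q}_L)$ identifiable. $T_L\Gamma$: minimizers of $\rho(Q,\Gamma)$ over $\mathcal{M}(\mathfrak{Q}_L)$ (assumed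 unique for $\Gamma\in\mathcal{M}(\mathfrak{L})$), with mixing measure $\Omega^*=M_L(T_L\Gamma)=\sum_\ell\omega^*_\ell\delta_{q^*_\ell}$, $M_L(\mathfrak{L})=\{M_L(T_Lm(\Lambda)):\Lambda\in\mathfrak{L}\}$. For $\alpha:[L]\to[K]$: $\bar\omega^*_k(\alpha)=\sum_{\ell\in\alpha^{-1}(k)}\omega^*_\ell$, $Q^*_k(\alpha)=\bar\omega^*_k(\alpha)^{-1}\sum_{\ell\in\alpha^{-1}(k)}\omega^*_\ell q^*_\ell$. $\Lambda$ is $\mathfrak{Q}_L$-regular if the projections exist uniquely for large $L$ and converge to $m(\Lambda)$, and some sequence $\alpha_L:[L]\to[K]$ ($\Lambda$-regular) has $Q^*_k(\alpha_L)\to\gamma_k$, $\bar\omega^*_k(\alpha_L)\to\lambda_k$. $\mathfrak{L}$ is $\mathfrak{Q}_L$-clusterable if all members are regular and there are functions $\chi_L:M_L(\mathfrak{L})\to\{[L]\to[K]\}$ with $\chi_L(M_L(T_Lm(\Lambda)))$ $\Lambda$-regular for every $\Lambda\in\mathfrak{L}$. *)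

(* Defs.v *)
From HB Require Import structures.
From Stdlib Require Import ClassicalEpsilon.
From mathcomp Require Import all_boot all_order all_algebra.
From mathcomp Require Import all_classical all_reals all_analysis.
Set Implicit Arguments. Unset Strict Implicit. Unset Printing Implicit Defensive.
Import Order.TTheory GRing.Theory Num.Theory.
Import numFieldNormedType.Exports.
Local Open Scope classical_set_scope.
Local Open Scope ring_scope.

Section Setup.
Context {R : realType} {d : measure_display} {X : measurableType d}.

Definition is_metric (dist : X -> X -> R) : Prop :=
  [/\ (forall x y, 0 <= dist x y),
      (forall x y, dist x y = 0 <-> x = y),
      (forall x y, dist x y = dist y x) &
      (forall x y z, dist x z <= dist x y + dist y z)].

Definition dball (dist : X -> X -> R) (x : X) (e : R) : set X :=
  [set y | dist x y < e].

Definition dopen (dist : X -> X -> R) (A : set X) : Prop :=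
  forall x, A x -> exists2 e : R, 0 < e & dball dist x e `<=` A.

Definition dclosed (dist : X -> X -> R) (A : set X) : Prop := dopen dist (~` A).

Definition dcompact (dist : X -> X -> R) : Prop :=
  forall (I : Type) (U : I -> set X), (forall i, dopen dist (U i)) ->
    (forall x, exists i, U i x) ->
    exists s : seq I, forall x, exists i, List.In i s /\ U i x.

Definition borel_of (dist : X -> X -> R) : Prop :=
  @measurable d X = <<s dopen dist >>.

Variable zeta : {sigma_finite_measure set X -> \bar R}.

Definition meq (mu nu : set X -> \bar R) : Prop :=
  forall A, measurable A -> mu A = nu A.

Definition is_density (mu : set X -> \bar R) (f : X -> R) : Prop :=
  [/\ measurable_fun setT f, (forall x, 0 <= f x) &
      forall A, measurable A -> mu A = (\int[zeta]_(x in A) (f x)%:E)%E].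

Definition dens (mu : set X -> \bar R) : X -> R :=
  epsilon (inhabits (fun _ : X => 0 : R)) (is_density mu).

Definition hell_dens (f g : X -> R) : R :=
  Num.sqrt (fine (\int[zeta]_x
     (((Num.sqrt (f x) - Num.sqrt (g x)) ^+ 2) / 2)%:E)%E).

Definition hell (mu nu : set X -> \bar R) : R := hell_dens (dens mu) (dens nu).

Definition regular_measure (dist : X -> X -> R) (mu : set X -> \bar R) : Prop :=
  forall A, measurable A ->
    mu A = ereal_inf [set mu U | U in [set U | dopen dist U /\ A `<=` U]] /\
    mu A = ereal_sup [set mu C | C in [set C | dclosed dist C /\ C `<=` A]].

Definition finite_moment (dist : X -> X -> R) (r : R) (mu : probability X R) : Prop :=
  exists x0 : X, (\int[mu]_x ((dist x0 x) `^ r)%:E < +oo)%E.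

Definition PX (dist : X -> X -> R) (r : R) (mu : probability X R) : Prop :=
  [/\ mu `<< zeta, regular_measure dist mu & finite_moment dist r mu].

(** ** Finite mixing measures with (at most) K labelled atoms:
    Lambda = sum_k Lambda.1 k * delta_(Lambda.2 k) *)
Definition mixing (K : nat) : Type := ('I_K -> R) * ('I_K -> probability X R).

Definition P2 (dist : X -> X -> R) (r : R) (K : nat) : set (mixing K) :=
  [set Lam | [/\ (forall k, 0 <= Lam.1 k), \sum_(k < K) Lam.1 k = 1 &
                 forall k, PX dist r (Lam.2 k)]].

Definition is_mix (K : nat) (Lam : mixing K) (Gam : set X -> \bar R) : Prop :=
  forall A, measurable A ->
    Gam A = (\sum_(k < K) (Lam.1 k)%:E * Lam.2 k A)%E.

Definition Mof (K : nat) (Lf : set (mixing K)) : set (probability X R) :=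
  [set Gam | exists2 Lam, Lf Lam & is_mix Lam Gam].

(* equality of two labelled mixing measures as measures on P(X) *)
Definition same_mixing (L : nat) (Om Om' : mixing L) : Prop :=
  forall q : probability X R,
    \sum_(l < L | `[< meq (Om.2 l) q >]) Om.1 l =
    \sum_(l < L | `[< meq (Om'.2 l) q >]) Om'.1 l.

Definition identifiable (L : nat) (QL : set (mixing L)) : Prop :=
  forall Om Om' (Gam : probability X R), QL Om -> QL Om' ->
    is_mix Om Gam -> is_mix Om' Gam -> same_mixing Om Om'.

Definition is_proj (L : nat) (QL : set (mixing L)) (Gam Q : probability X R) : Prop :=
  Mof QL Q /\ forall Q', Mof QL Q' -> hell Q Gam <= hell Q' Gam.

Definition unique_proj (L : nat) (QL : set (mixing L)) (Gam Q : probability X R) : Prop :=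
  is_proj QL Gam Q /\ forall Q', is_proj QL Gam Q' -> meq Q' Q.

Definition wbar (L K : nat) (Om : mixing L) (al : 'I_L -> 'I_K) (k : 'I_K) : R :=
  \sum_(l < L | al l == k) Om.1 l.

Definition Qstar_dens (L K : nat) (Om : mixing L) (al : 'I_L -> 'I_K) (k : 'I_K) : X -> R :=
  fun x => (wbar Om al k)^-1 * \sum_(l < L | al l == k) Om.1 l * dens (Om.2 l) x.

Section Clustering.
Local Unset Implicit Arguments.
Variables (Qf : forall L : nat, set (mixing L))
          (ML : forall L : nat, probability X R -> mixing L).
Local Set Implicit Arguments.
(* ML L Gam is the (labelled) mixing measure M_L(T_L Gam) of the projection *)

Definition alpha_regular (K : nat) (Lam : mixing K) (Gam : probability X R)
    (al : forall L : nat, 'I_L -> 'I_K) : Prop :=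
  forall k : 'I_K,
    (fun L : nat => hell_dens (Qstar_dens (ML L Gam) (al L) k) (dens (Lam.2 k)))
       @ \oo --> (0 : R) /\
    (fun L : nat => wbar (ML L Gam) (al L) k) @ \oo --> Lam.1 k.

Definition QL_regular (K : nat) (Lam : mixing K) : Prop :=
  forall Gam : probability X R, is_mix Lam Gam ->
  [/\ (exists N, forall L, (N <= L)%N -> exists Q, unique_proj (Qf L) Gam Q),
      (forall e : R, 0 < e -> exists N, forall L, (N <= L)%N ->
          forall Q, is_proj (Qf L) Gam Q -> hell Q Gam < e) &
      exists al : forall L : nat, 'I_L -> 'I_K, alpha_regular Lam Gam al].

Definition QL_clusterable (K : nat) (Lf : set (mixing K)) : Prop :=
  (forall Lam, Lf Lam -> QL_regular Lam) /\
  exists chi : forall L : nat, mixing L -> ('I_L -> 'I_K),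
    forall Lam, Lf Lam -> forall Gam : probability X R, is_mix Lam Gam ->
      alpha_regular Lam Gam (fun L => chi L (ML L Gam)).

End Clustering.

Definition E0 (K : nat) (Lam : mixing K) : set X :=
  [set x | exists i j : 'I_K, i <> j /\
      Lam.1 i * dens (Lam.2 i) x = Lam.1 j * dens (Lam.2 j) x].

Definition X0 (K : nat) (Lam : mixing K) : set X := ~` E0 Lam.

Definition is_argmax (K : nat) (Lam : mixing K) (x : X) (k : 'I_K) : Prop :=
  forall j : 'I_K, Lam.1 j * dens (Lam.2 j) x <= Lam.1 k * dens (Lam.2 k) x.

Definition bayes_rel (K : nat) (Lam : mixing K) (x y : X) : Prop :=
  forall k : 'I_K, is_argmax Lam x k <-> is_argmax Lam y k.

Definition bayes_partition (K : nat) (Lam : mixing K) : set (set X) :=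
  [set C | exists2 x, X0 Lam x & C = [set y | X0 Lam y /\ bayes_rel Lam x y]].

Definition mix_eq (K : nat) (Lam Lam' : mixing K) : Prop :=
  Lam.1 = Lam'.1 /\ forall k, meq (Lam.2 k) (Lam'.2 k).

End Setup.

Arguments P2 {R d X} zeta dist r K _.

(* Main.v *)
Require Import Defs.
From HB Require Import structures.
From mathcomp Require Import all_boot all_order all_algebra.
From mathcomp Require Import all_classical all_reals all_analysis.
From mathcomp Require Import ring lra measurable_realfun.
From Stdlib Require Import ClassicalEpsilon.
Import Order.TTheory GRing.Theory Num.Theory.
Import numFieldNormedType.Exports.
Local Open Scope classical_set_scope.
Local Open Scope ring_scope.

Section Aux.
Context {R : realType} {d : measure_display} {X : measurableType d}.
Variable zeta : {sigma_finite_measure set X -> \bar R}.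

Definition Hd (f g : X -> R) : \bar R :=
  (\int[zeta]_x (((Num.sqrt (f x) - Num.sqrt (g x)) ^+ 2) / 2)%:E)%E.

Lemma mfun_sq (f g : X -> R) : measurable_fun setT f -> measurable_fun setT g ->
  measurable_fun setT (fun x => ((Num.sqrt (f x) - Num.sqrt (g x)) ^+ 2) / 2).
Proof.
move=> mf mg.
apply: (measurable_realfun.measurable_funM _ (measurable_cst _)).
apply: measurable_realfun.measurable_funX; apply: measurable_realfun.measurable_funB.
- exact: measurableT_comp (measurable_realfun.continuous_measurable_fun (@sqrt_continuous R)) mf.
- exact: measurableT_comp (measurable_realfun.continuous_measurable_fun (@sqrt_continuous R)) mg.
Qed.

Lemma sq_ge0 (a b : R) : 0 <= ((a - b) ^+ 2) / 2.
Proof. by rewrite divr_ge0 // sqr_ge0. Qed.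

Lemma Hd_ge0 f g : (0 <= Hd f g)%E.
Proof. by apply: integral_ge0 => x _; rewrite lee_fin sq_ge0. Qed.

Lemma dens_exists (mu : probability X R) : mu `<< zeta ->
  is_density zeta mu (dens zeta mu).
Proof.
move=> muz; rewrite /dens; apply: epsilon_spec.
have [g [g0 gfin gint gE]] := radon_nikodym_sigma_finite muz.
exists (fun x => fine (g x)); split.
- have H1 : measurable_fun [set: \bar R] (@fine R) by apply: measurable_realfun.fine_measurable. have H2 := measurable_int zeta gint. exact: (measurableT_comp H1 H2).
- by move=> x; exact: fine_ge0.
- by move=> A mA; rewrite gE //; apply: eq_integral => x _; rewrite fineK.
Qed.

Lemma meq_dens (mu nu : set X -> \bar R) : meq mu nu -> dens zeta mu = dens zeta nu.
Proof.
move=> e; rewrite /dens; congr epsilon; apply/funext => f; apply/propext.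
rewrite /is_density; split=> -[a b c]; split=> // A mA.
- by rewrite -e //; exact: c.
- by rewrite e //; exact: c.
Qed.

Lemma int_fin (F : X -> R) : (forall x, 0 <= F x) ->
  zeta.-integrable setT (EFin \o F) -> (\int[zeta]_x (F x)%:E < +oo)%E.
Proof.
move=> F0 /integrableP [_ h].
have -> : (fun x => (F x)%:E) = (fun x => `|(EFin \o F) x|)%E.
  by apply/funext => x; rewrite [RHS]gee0_abs // lee_fin.
exact: h.
Qed.

Lemma dens_integrable (mu : probability X R) : mu `<< zeta ->
  zeta.-integrable setT (EFin \o dens zeta mu).
Proof.
move=> /dens_exists [m0 p0 h]; apply/integrableP; split.
  exact/measurable_realfun.measurable_EFinP.
have -> : (fun x => `|(EFin \o dens zeta mu) x|)%E = (fun x => (dens zeta mu x)%:E).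
  by apply/funext => x; rewrite [LHS]gee0_abs // lee_fin.
by rewrite -h // probability_setT ltry.
Qed.


Lemma mEF (F : X -> R) : measurable_fun setT F -> measurable_fun setT (fun x => (F x)%:E).
Proof. by move=> mF; apply/measurable_EFinP. Qed.

Lemma ineq1 (a b : R) : (a - b) ^+ 2 / 2 <= a ^+ 2 + b ^+ 2.
Proof.
rewrite -subr_ge0.
have -> : a ^+ 2 + b ^+ 2 - (a - b) ^+ 2 / 2 = (a + b) ^+ 2 / 2 by field.
by rewrite divr_ge0 // sqr_ge0.
Qed.

Lemma ineq2 (a b c : R) : (a - b) ^+ 2 / 2 <= 2 * ((c - a) ^+ 2 / 2) + 2 * ((c - b) ^+ 2 / 2).
Proof.
rewrite -subr_ge0.
have -> : 2 * ((c - a) ^+ 2 / 2) + 2 * ((c - b) ^+ 2 / 2) - (a - b) ^+ 2 / 2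
  = (c - a + (c - b)) ^+ 2 / 2 by field.
by rewrite divr_ge0 // sqr_ge0.
Qed.

Lemma Hd_fin (f g : X -> R) : measurable_fun setT f -> measurable_fun setT g ->
  (forall x, 0 <= f x) -> (forall x, 0 <= g x) ->
  zeta.-integrable setT (EFin \o f) -> zeta.-integrable setT (EFin \o g) ->
  (Hd f g < +oo)%E.
Proof.
move=> mf mg f0 g0 If Ig.
apply: int_fin => [x|]; first exact: sq_ge0.
apply: (le_integrable measurableT _ _ (integrableD measurableT If Ig)).
  by apply/measurable_EFinP; exact: mfun_sq.
move=> x _ /=.
rewrite lee_fin ger0_norm; last exact: sq_ge0.
rewrite ger0_norm; last by rewrite addr_ge0.
have := ineq1 (Num.sqrt (f x)) (Num.sqrt (g x)).
by rewrite !sqr_sqrtr.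
Qed.

Lemma Hd_tri (f g h : X -> R) : measurable_fun setT f -> measurable_fun setT g ->
  measurable_fun setT h ->
  (Hd f g <= 2%:E * Hd h f + 2%:E * Hd h g)%E.
Proof.
move=> mf mg mh.
have E : (2%:E * Hd h f + 2%:E * Hd h g = \int[zeta]_x
   (2 * (((Num.sqrt (h x) - Num.sqrt (f x)) ^+ 2) / 2) +
    2 * (((Num.sqrt (h x) - Num.sqrt (g x)) ^+ 2) / 2))%:E)%E.
  under [RHS]eq_integral do rewrite EFinD.
  rewrite ge0_integralD //; last first.
  - by apply/measurable_EFinP; apply: (measurable_funM (measurable_cst _)); exact: mfun_sq.
  - by move=> x _; rewrite lee_fin mulr_ge0 // sq_ge0.
  - by apply/measurable_EFinP; apply: (measurable_funM (measurable_cst _)); exact: mfun_sq.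
  - by move=> x _; rewrite lee_fin mulr_ge0 // sq_ge0.
  under [X in (_ = X + _)%E]eq_integral do rewrite EFinM.
  under [X in (_ = _ + X)%E]eq_integral do rewrite EFinM.
  rewrite !ge0_integralZl_EFin //.
  - by move=> x _; rewrite lee_fin sq_ge0.
  - by apply/measurable_EFinP; exact: mfun_sq.
  - by move=> x _; rewrite lee_fin sq_ge0.
  - by apply/measurable_EFinP; exact: mfun_sq.
rewrite E; apply: ge0_le_integral => //.
- by move=> x _; rewrite lee_fin sq_ge0.
- by apply/measurable_EFinP; exact: mfun_sq.
- apply/measurable_EFinP; apply: measurable_funD;
    by apply: (measurable_funM (measurable_cst _)); exact: mfun_sq.
- by move=> x _; rewrite lee_fin ineq2.
Qed.

Lemma Hd0_meq (mu nu : probability X R) : mu `<< zeta -> nu `<< zeta ->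
  Hd (dens zeta mu) (dens zeta nu) = 0%E -> meq mu nu.
Proof.
move=> muz nuz H0 A mA.
have [mf f0 hf] := dens_exists _ muz; have [mg g0 hg] := dens_exists _ nuz.
rewrite hf // hg //.
have mF := mEF _ (mfun_sq _ _ mf mg).
have := (ae_eq_integral_abs zeta measurableT mF).1.
have -> : (fun x => `|((Num.sqrt (dens zeta mu x) - Num.sqrt (dens zeta nu x)) ^+ 2 / 2)%:E|)%E
   = (fun x => ((Num.sqrt (dens zeta mu x) - Num.sqrt (dens zeta nu x)) ^+ 2 / 2)%:E).
  by apply/funext => x; rewrite gee0_abs // lee_fin sq_ge0.
move=> /(_ H0) ae.
apply: ae_eq_integral => //.
- exact: measurable_funTS (mEF _ mf).
- exact: measurable_funTS (mEF _ mg).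
apply: filterS ae => x /= Hx Ax.
have := Hx I => -[].
move/eqP; rewrite mulf_eq0 invr_eq0 pnatr_eq0 orbF sqrf_eq0 subr_eq0 => /eqP e.
by rewrite -(sqr_sqrtr (f0 x)) -(sqr_sqrtr (g0 x)) e.
Qed.

Lemma Qstar_props L K (Om : mixing L) (al : 'I_L -> 'I_K) k :
  (forall l, 0 <= Om.1 l) -> (forall l, Om.2 l `<< zeta) ->
  [/\ measurable_fun setT (Qstar_dens zeta Om al k),
      forall x, 0 <= Qstar_dens zeta Om al k x &
      zeta.-integrable setT (EFin \o Qstar_dens zeta Om al k)].
Proof.
move=> w0 ac.
have I : zeta.-integrable setT (EFin \o Qstar_dens zeta Om al k).
  have -> : EFin \o Qstar_dens zeta Om al k = fun x =>
     ((wbar Om al k)^-1%:E * \sum_(l < L | al l == k) (Om.1 l)%:E * (dens zeta (Om.2 l) x)%:E)%E.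
    apply/funext => x /=; rewrite /Qstar_dens EFinM -sumEFin; congr (_ * _)%E.
  apply: (integrableZl measurableT _
    (f := fun x => (\sum_(l < L | al l == k) (Om.1 l)%:E * (dens zeta (Om.2 l) x)%:E)%E)).
  apply: (integrable_sum measurableT _ (h := fun l x => ((Om.1 l)%:E * (dens zeta (Om.2 l) x)%:E)%E)) => l _.
  apply: (integrableZl measurableT _ (f := fun x => (dens zeta (Om.2 l) x)%:E)).
  exact: dens_integrable.
split => //.
- exact/measurable_EFinP/(measurable_int zeta I).
- move=> x; rewrite /Qstar_dens mulr_ge0 //.
    by rewrite invr_ge0 /wbar sumr_ge0.
  apply: sumr_ge0 => l _; rewrite mulr_ge0 //.
  by have [_ + _] := dens_exists _ (ac l); apply.
Qed.


Lemma comp_meq K (mu nu : probability X R) (Om : forall L, mixing L)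
  (al : forall L, 'I_L -> 'I_K) k N :
  mu `<< zeta -> nu `<< zeta ->
  (forall L, (N <= L)%N -> (forall l, 0 <= (Om L).1 l) /\ forall l, (Om L).2 l `<< zeta) ->
  (fun L => hell_dens zeta (Qstar_dens zeta (Om L) (al L) k) (dens zeta mu)) @ \oo --> (0:R) ->
  (fun L => hell_dens zeta (Qstar_dens zeta (Om L) (al L) k) (dens zeta nu)) @ \oo --> (0:R) ->
  meq mu nu.
Proof.
move=> muz nuz hN cu cv.
apply: Hd0_meq => //.
have [mf f0 _] := dens_exists _ muz; have [mg g0 _] := dens_exists _ nuz.
have If := dens_integrable _ muz; have Ig := dens_integrable _ nuz.
set f := dens zeta mu in mf f0 If cu *; set g := dens zeta nu in mg g0 Ig cv *.
have finfg : Hd f g \is a fin_num by rewrite ge0_fin_numE ?Hd_ge0 // Hd_fin.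
pose u L := hell_dens zeta (Qstar_dens zeta (Om L) (al L) k) f.
pose v L := hell_dens zeta (Qstar_dens zeta (Om L) (al L) k) g.
pose w L := 2 * (u L * u L) + 2 * (v L * v L).
have cw : w @ \oo --> (2 * (0 * 0) + 2 * (0 * 0) : R).
  apply: cvgD; apply: cvgM; (try exact: cvg_cst); exact: cvgM.
have le : fine (Hd f g) <= lim (w @ \oo).
  apply: limr_ge; first by apply/cvg_ex; eexists; exact: cw.
  exists N => // L /= HL.
  have [w0 ac] := hN L HL.
  have [mh h0 Ih] := Qstar_props _ _ (Om L) (al L) k w0 ac.
  set h := Qstar_dens zeta (Om L) (al L) k in mh h0 Ih *.
  have fin1 : Hd h f \is a fin_num by rewrite ge0_fin_numE ?Hd_ge0 // Hd_fin.
  have fin2 : Hd h g \is a fin_num by rewrite ge0_fin_numE ?Hd_ge0 // Hd_fin.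
  rewrite /w /u /v.
  change (fine (Hd f g) <= 2 * (Num.sqrt (fine (Hd h f)) * Num.sqrt (fine (Hd h f)))
     + 2 * (Num.sqrt (fine (Hd h g)) * Num.sqrt (fine (Hd h g)))).
  rewrite -!expr2 !sqr_sqrtr ?fine_ge0 ?Hd_ge0 //.
  rewrite -lee_fin EFinD !EFinM !fineK //; exact: Hd_tri.
rewrite (cvg_lim (@Rhausdorff R) cw) !mulr0 addr0 in le.
rewrite -(fineK finfg); congr EFin; apply/le_anti; rewrite le fine_ge0 ?Hd_ge0 //.
Qed.


Definition E0' {K} (w : 'I_K -> R) (F : 'I_K -> X -> R) : set X :=
  [set x | exists i j : 'I_K, i <> j /\ w i * F i x = w j * F j x].
Definition am' {K} (w : 'I_K -> R) (F : 'I_K -> X -> R) x k : Prop :=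
  forall j : 'I_K, w j * F j x <= w k * F k x.
Definition BP {K} (w : 'I_K -> R) (F : 'I_K -> X -> R) : set (set X) :=
  [set C | exists2 x, (~` E0' w F) x &
     C = [set y | (~` E0' w F) y /\ forall k, am' w F x k <-> am' w F y k]].

Lemma BPE K (Lam : mixing K) :
  bayes_partition zeta Lam = BP Lam.1 (fun k => dens zeta (Lam.2 k)).
Proof. by []. Qed.

Lemma bp_ext K (Lam Lam' : mixing K) : Lam.1 = Lam'.1 ->
  (forall k, dens zeta (Lam.2 k) = dens zeta (Lam'.2 k)) ->
  bayes_partition zeta Lam = bayes_partition zeta Lam'.
Proof.
move=> e1 e2; rewrite !BPE e1.
have -> : (fun k => dens zeta (Lam.2 k)) = (fun k => dens zeta (Lam'.2 k)).
  by apply/funext => k; exact: e2.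
by [].
Qed.

End Aux.

Theorem proposition3
  (R : realType) (d : measure_display) (X : measurableType d)
  (dist : X -> X -> R) (r : R)
  (zeta : {sigma_finite_measure set X -> \bar R})
  (Qf : forall L : nat, set (@mixing R d X L))
  (ML : forall L : nat, probability X R -> @mixing R d X L)
  (K : nat) (Lf : set (@mixing R d X K)) :
  is_metric dist -> dcompact dist -> borel_of dist -> 0 < r ->
  (forall L, Qf L `<=` P2 zeta dist r L) ->
  (forall L, identifiable (Qf L)) ->
  (* ML L Gam is the mixing measure M_L(T_L Gam) of the (unique) projection *)
  (forall L (Gam Q : probability X R), unique_proj zeta (Qf L) Gam Q ->
      Qf L (ML L Gam) /\ is_mix (ML L Gam) Q) ->
  (1 <= K)%N ->
  Lf `<=` P2 zeta dist r K ->
  QL_clusterable zeta Qf ML Lf ->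
  forall Gam : probability X R, Mof Lf Gam ->
    (exists Lam, [/\ Lf Lam, is_mix Lam Gam &
       forall Lam', Lf Lam' -> is_mix Lam' Gam -> mix_eq Lam' Lam]) /\
    (forall Lam Lam', Lf Lam -> Lf Lam' -> is_mix Lam Gam -> is_mix Lam' Gam ->
       bayes_partition zeta Lam = bayes_partition zeta Lam').
Proof.
move=> _ _ _ _ QP _ MLh _ LP [reg [chi chiP]] Gam [Lam LamL LamG].
have key : forall L1 L2, Lf L1 -> Lf L2 -> is_mix L1 Gam -> is_mix L2 Gam ->
    mix_eq L1 L2.
  move=> L1 L2 H1 H2 G1 G2.
  have R1 := chiP _ H1 _ G1; have R2 := chiP _ H2 _ G2.
  have [[N HN] _ _] := reg _ H1 _ G1.
  have hN : forall L, (N <= L)%N -> (forall l, 0 <= (ML L Gam).1 l) /\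
      forall l, (ML L Gam).2 l `<< zeta.
    move=> L /HN [Q /MLh [/QP [w0 _ px] _]]; split => // l.
    by have [] := px l.
  have [_ _ px1] := LP _ H1; have [_ _ px2] := LP _ H2.
  split.
  - apply/funext => k; have [_ a] := R1 k; have [_ b] := R2 k.
    by rewrite -(cvg_lim (@Rhausdorff R) a) -(cvg_lim (@Rhausdorff R) b).
  - move=> k; have [a _] := R1 k; have [b _] := R2 k.
    have [ac1 _ _] := px1 k; have [ac2 _ _] := px2 k.
    exact: (comp_meq _ _ _ _ _ _ _ _ ac1 ac2 hN a b).
split.
  by exists Lam; split => // Lam' H' G'; exact: key.
move=> L1 L2 H1 H2 G1 G2; have [e1 e2] := key _ _ H1 H2 G1 G2.
by apply: bp_ext => // k; exact: meq_dens.
Qed.
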